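(* For every triangle $T$ (a set of three non-collinear points in some $\mathbb{R}^k$) there is $p_0(T)$ such that $T$ is Euclidean sub-$p$-toral for every prime $p\ge p_0(T)$.
   Context: A $p$-torus is a group isomorphic to $(\mathbb{Z}_p)^\alpha$ for some $\alpha\ge1$. A set $X\subset\mathbb{R}^k$ is Euclidean sub-$p$-toral if there exist $n\ge k$, a $p$-torus $G$ and an action of $G$ on $\mathbb{R}^n$ by isometries such that $X$ (viewed in $\mathbb{R}^n$ via the standard inclusion $\mathbb{R}^k\subset\mathbb{R}^n$) is contained in a single $G$-orbit. *)

(* Defs.v *)
From HB Require Import structures.
From mathcomp Require Import all_boot all_order all_algebra.
From mathcomp Require Import reals.
Set Implicit Arguments. Unset Strict Implicit. Unset Printing Implicit Defensive.
Import Order.TTheory GRing.Theory Num.Theory.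
Local Open Scope ring_scope.

Definition sqdist (R : realType) (m : nat) (x y : 'rV[R]_m) : R :=
  \sum_(i < m) (x 0 i - y 0 i) ^+ 2.

Definition std_incl (R : realType) (k n : nat) (x : 'rV[R]_k) : 'rV[R]_n :=
  \row_(i < n) (if @insub nat (fun j => j < k)%N _ (nat_of_ord i) is Some j
                then x 0 j else 0).

(* the p-torus (Z_p)^alpha, realised as the additive group 'rV['F_p]_alpha,
   acts on R^n by isometries via [act] *)
Definition isometric_action (p alpha n : nat) (R : realType)
    (act : 'rV['F_p]_alpha -> 'rV[R]_n -> 'rV[R]_n) : Prop :=
  [/\ forall x, act 0 x = x,
      forall g h x, act (g + h) x = act g (act h x)
    & forall g x y, sqdist (act g x) (act g y) = sqdist x y].

Definition euclidean_sub_p_toral (p : nat) (R : realType) (k : nat)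
    (X : 'rV[R]_k -> Prop) : Prop :=
  exists n : nat, (k <= n)%N /\
  exists alpha : nat, (1 <= alpha)%N /\
  exists act : 'rV['F_p]_alpha -> 'rV[R]_n -> 'rV[R]_n,
    isometric_action act /\
    exists x0 : 'rV[R]_n,
      forall x, X x -> exists g, std_incl n x = act g x0.

Definition non_collinear (R : realType) (k : nat) (a b c : 'rV[R]_k) : Prop :=
  \rank (col_mx (b - a) (c - a)) = 2%N.

(* Main.v *)
Require Import Defs.
From HB Require Import structures.
From mathcomp Require Import all_boot all_order all_algebra.
From mathcomp Require Import reals.
From mathcomp Require Import boolp classical_sets trigo.
From mathcomp Require Import ring lra zify.
Set Implicit Arguments. Unset Strict Implicit. Unset Printing Implicit Defensive.
Import Order.TTheory GRing.Theory Num.Theory.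
Local Open Scope ring_scope.
Definition dotp (R : realType) (m : nat) (u v : 'rV[R]_m) : R := (u *m v^T) 0 0.

Lemma dotpE (R : realType) (m : nat) (u v : 'rV[R]_m) :
  dotp u v = \sum_(i < m) u 0 i * v 0 i.
Proof. by rewrite /dotp mxE; apply: eq_bigr => i _; rewrite mxE. Qed.

Lemma sqdistE (R : realType) (m : nat) (x y : 'rV[R]_m) :
  sqdist x y = dotp (x - y) (x - y).
Proof. by rewrite dotpE /sqdist; apply: eq_bigr => i _; rewrite !mxE expr2. Qed.

Lemma dotpC (R : realType) (m : nat) (u v : 'rV[R]_m) : dotp u v = dotp v u.
Proof. by rewrite !dotpE; apply: eq_bigr => i _; rewrite mulrC. Qed.

Lemma dotpDl (R : realType) (m : nat) (u v w : 'rV[R]_m) :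
  dotp (u + v) w = dotp u w + dotp v w.
Proof. by rewrite /dotp mulmxDl mxE. Qed.

Lemma dotpZl (R : realType) (m : nat) a (u w : 'rV[R]_m) :
  dotp (a *: u) w = a * dotp u w.
Proof. by rewrite /dotp -scalemxAl mxE. Qed.

Lemma dotpNl (R : realType) (m : nat) (u w : 'rV[R]_m) :
  dotp (- u) w = - dotp u w.
Proof. by rewrite -scaleN1r dotpZl mulN1r. Qed.

Lemma dotpBl (R : realType) (m : nat) (u v w : 'rV[R]_m) :
  dotp (u - v) w = dotp u w - dotp v w.
Proof. by rewrite dotpDl dotpNl. Qed.

Lemma dotpDr (R : realType) (m : nat) (u v w : 'rV[R]_m) :
  dotp w (u + v) = dotp w u + dotp w v.
Proof. by rewrite dotpC dotpDl !(dotpC w). Qed.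

Lemma dotpBr (R : realType) (m : nat) (u v w : 'rV[R]_m) :
  dotp w (u - v) = dotp w u - dotp w v.
Proof. by rewrite dotpC dotpBl !(dotpC w). Qed.

Lemma dotpZr (R : realType) (m : nat) a (u w : 'rV[R]_m) :
  dotp w (a *: u) = a * dotp w u.
Proof. by rewrite dotpC dotpZl dotpC. Qed.

Lemma dotp_ge0 (R : realType) (m : nat) (u : 'rV[R]_m) : 0 <= dotp u u.
Proof. by rewrite dotpE; apply: sumr_ge0 => i _; rewrite -expr2 sqr_ge0. Qed.

Lemma dotp_eq0 (R : realType) (m : nat) (u : 'rV[R]_m) : dotp u u = 0 -> u = 0.
Proof.
rewrite dotpE => /eqP; rewrite psumr_eq0 => [/allP H|i _]; last by rewrite -expr2 sqr_ge0.
apply/rowP => i; rewrite mxE; have := H i (mem_index_enum _).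
by rewrite -expr2 sqrf_eq0 => /eqP.
Qed.

Lemma sqdistC (R : realType) (m : nat) (x y : 'rV[R]_m) : sqdist x y = sqdist y x.
Proof. by rewrite !sqdistE -opprB dotpNl dotpC dotpNl opprK. Qed.

Lemma sqdist_ge0 (R : realType) (m : nat) (x y : 'rV[R]_m) : 0 <= sqdist x y.
Proof. by rewrite sqdistE dotp_ge0. Qed.

Lemma sqdist_mul (R : realType) (m : nat) (M : 'M[R]_m) (x y : 'rV[R]_m) :
  M *m M^T = 1%:M -> sqdist (x *m M) (y *m M) = sqdist x y.
Proof.
move=> HM; rewrite !sqdistE /dotp -mulmxBl trmx_mul !mulmxA -(mulmxA _ M) HM.
by rewrite mulmx1.
Qed.

Lemma dotp_row (R : realType) (m1 m2 : nat) (a c : 'rV[R]_m1) (b d : 'rV[R]_m2) :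
  dotp (row_mx a b) (row_mx c d) = dotp a c + dotp b d.
Proof. by rewrite /dotp tr_row_mx mul_row_col mxE. Qed.

Lemma sqdist_row (R : realType) (m1 m2 : nat) (a c : 'rV[R]_m1) (b d : 'rV[R]_m2) :
  sqdist (row_mx a b) (row_mx c d) = sqdist a c + sqdist b d.
Proof. by rewrite !sqdistE opp_row_mx add_row_mx dotp_row. Qed.

Lemma ord2_cases (i : 'I_2) : i = 0 \/ i = 1.
Proof. by case: i => [[|[|//]]] Hi; [left|right]; apply/val_inj. Qed.

Definition rot (R : realType) (a : R) : 'M[R]_2 :=
  \matrix_(i < 2, j < 2)
    if i == 0 then (if j == 0 then cos a else sin a)
    else (if j == 0 then - sin a else cos a).

Lemma rotM (R : realType) (a b : R) : rot a *m rot b = rot (a + b).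
Proof.
apply/matrixP => i j; rewrite !mxE !big_ord_recr !big_ord0 !mxE /=.
case: (ord2_cases i) => ->; case: (ord2_cases j) => -> /=;
  rewrite ?sinD ?cosD; ring.
Qed.

Lemma rot0 (R : realType) : rot (0 : R) = 1%:M.
Proof.
apply/matrixP => i j; rewrite !mxE sin0 cos0.
by case: (ord2_cases i) => ->; case: (ord2_cases j) => -> /=; rewrite ?oppr0.
Qed.

Lemma rotT (R : realType) (a : R) : rot a *m (rot a)^T = 1%:M.
Proof.
apply/matrixP => i j; rewrite !mxE !big_ord_recr !big_ord0 !mxE /=.
have h := cos2Dsin2 a.
by case: (ord2_cases i) => ->; case: (ord2_cases j) => -> /=; nra.
Qed.

Lemma rot_period (R : realType) (a : R) (n : nat) : rot (a + (pi *+ 2) *+ n) = rot a.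
Proof.
apply/matrixP => i j; rewrite !mxE.
by rewrite (periodicn (@sinD2pi R)) (periodicn (@cosD2pi R)).
Qed.

Definition D4 (R : realType) (k : nat) (a b c d : R) : 'M[R]_(2 + (2 + (2 + (2 + k)))) :=
  block_mx (rot a) 0 0 (block_mx (rot b) 0 0 (block_mx (rot c) 0 0
     (block_mx (rot d) 0 0 1%:M))).

Lemma blk_mul (R : realType) (m n : nat) (A A' : 'M[R]_m) (B B' : 'M[R]_n) :
  block_mx A 0 0 B *m block_mx A' 0 0 B' = block_mx (A *m A') 0 0 (B *m B').
Proof. by rewrite mulmx_block !mulmx0 !mul0mx !addr0 !add0r. Qed.

Lemma blk_tr (R : realType) (m n : nat) (A : 'M[R]_m) (B : 'M[R]_n) :
  (block_mx A 0 0 B)^T = block_mx A^T 0 0 B^T.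
Proof. by rewrite tr_block_mx !trmx0. Qed.

Lemma blk_1 (R : realType) (m n : nat) :
  block_mx (1%:M : 'M[R]_m) 0 0 (1%:M : 'M[R]_n) = 1%:M.
Proof. by rewrite -scalar_mx_block. Qed.

Lemma D4M (R : realType) (k : nat) (a b c d a' b' c' d' : R) :
  D4 k a b c d *m D4 k a' b' c' d' = D4 k (a + a') (b + b') (c + c') (d + d').
Proof. by rewrite /D4 !blk_mul !rotM mulmx1. Qed.

Lemma D4T (R : realType) (k : nat) (a b c d : R) :
  D4 k a b c d *m (D4 k a b c d)^T = 1%:M.
Proof. by rewrite /D4 !blk_tr !blk_mul !rotT trmx1 mulmx1 !blk_1. Qed.

Lemma D40 (R : realType) (k : nat) : D4 k 0 0 0 (0 : R) = 1%:M.
Proof. by rewrite /D4 !rot0 !blk_1. Qed.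

Definition angn (R : realType) (q v : nat) : R := pi *+ 2 * v%:R / q%:R.

Definition ang (R : realType) (p : nat) (g : 'F_p) : R :=
  angn R (Zp_trunc (pdiv p)).+2 (val g).

Lemma ang0 (R : realType) (p : nat) : ang R (0 : 'F_p) = 0.
Proof. by rewrite /ang /angn /= mulr0 mul0r. Qed.

Lemma rot_angD (R : realType) (p : nat) (g h : 'F_p) :
  rot (ang R (g + h)) = rot (ang R g + ang R h).
Proof.
set q := (Zp_trunc (pdiv p)).+2.
have -> : ang R g + ang R h = ang R (g + h) + (pi *+ 2) *+ ((val g + val h) %/ q).
  rewrite /ang /angn /=.
  have hq : (q%:R : R) != 0 by rewrite pnatr_eq0.
  have e : ((val g + val h)%N%:R : R) = ((val g + val h) %% q)%N%:R + ((val g + val h) %/ q)%N%:R * q%:R.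
    by rewrite {1}(divn_eq (val g + val h) q) natrD natrM addrC.
  rewrite -/q -mulr_natr.
  transitivity (pi *+ 2 * (val g + val h)%N%:R / q%:R : R); first by rewrite natrD; field.
  by rewrite e; field.
by rewrite rot_period.
Qed.

Definition actD (R : realType) (p k : nat) (g : 'rV['F_p]_4) (x : 'rV[R]_(2 + (2 + (2 + (2 + k))))) :=
  x *m D4 k (ang R (g 0 0)) (ang R (g 0 1)) (ang R (g 0 2%:R)) (ang R (g 0 3%:R)).

Lemma actD_iso (R : realType) (p k : nat) : isometric_action (@actD R p k).
Proof.
split.
- by move=> x; rewrite /actD !mxE !ang0 D40 mulmx1.
- move=> g h x; rewrite /actD -mulmxA D4M !mxE.
  by rewrite /D4 !rot_angD !(addrC (ang R (h 0 _))).
- by move=> g x y; rewrite /actD sqdist_mul // D4T.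
Qed.

Definition e2 (R : realType) : 'rV[R]_2 := \row_(j < 2) (j == 0)%:R.

Definition X4 (R : realType) (k : nat) (r1 r2 r3 r4 : R) : 'rV[R]_(2 + (2 + (2 + (2 + k)))) :=
  row_mx (r1 *: e2 R) (row_mx (r2 *: e2 R) (row_mx (r3 *: e2 R) (row_mx (r4 *: e2 R) 0))).

Lemma row_blk (R : realType) (m n : nat) (a : 'rV[R]_m) (b : 'rV[R]_n) (A : 'M[R]_m) (B : 'M[R]_n) :
  row_mx a b *m block_mx A 0 0 B = row_mx (a *m A) (b *m B).
Proof. by rewrite mul_row_block !mulmx0 !addr0 !add0r. Qed.

Definition chord (R : realType) (a b : R) := 2 - 2 * cos (a - b).

Lemma sqdist_e2 (R : realType) (r a b : R) :
  sqdist (r *: e2 R *m rot a) (r *: e2 R *m rot b) = r ^+ 2 * chord a b.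
Proof.
rewrite /sqdist !big_ord_recr big_ord0 /= !mxE !big_ord_recr !big_ord0 /= !mxE /=.
rewrite /chord cosB.
have h1 := cos2Dsin2 a; have h2 := cos2Dsin2 b.
rewrite ?mulr0 ?mulr1 ?add0r ?addr0 ?mul0r ?subr0.
nra.
Qed.

Lemma dist_X4 (R : realType) (k : nat) (r1 r2 r3 r4 a b c d a' b' c' d' : R) :
  sqdist (X4 k r1 r2 r3 r4 *m D4 k a b c d) (X4 k r1 r2 r3 r4 *m D4 k a' b' c' d') =
  r1 ^+ 2 * chord a a' + r2 ^+ 2 * chord b b' + r3 ^+ 2 * chord c c' + r4 ^+ 2 * chord d d'.
Proof.
rewrite /X4 /D4 !row_blk !sqdist_row !sqdist_e2 mul0mx.
have -> : sqdist (0 : 'rV[R]_k) 0 = 0.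
  by rewrite /sqdist big1 // => i _; rewrite !mxE subrr expr0n.
by rewrite addr0 !addrA.
Qed.

Definition Real3 (R : realType) (p k : nat) (x y z : R) :=
  exists act : 'rV['F_p]_4 -> 'rV[R]_(2 + (2 + (2 + (2 + k)))) -> 'rV[R]_(2 + (2 + (2 + (2 + k)))),
    isometric_action act /\ exists x0 g1 g2,
    [/\ sqdist x0 (act g1 x0) = x, sqdist x0 (act g2 x0) = y &
        sqdist (act g1 x0) (act g2 x0) = z].

Definition Sn (R : realType) (q n : nat) : R := sin (n%:R * (pi / q%:R)).

Lemma chord_sin (R : realType) (u : R) : 2 - 2 * cos (u *+ 2) = 4 * sin u ^+ 2.
Proof. rewrite cos_mulr2n cos2sin2; ring. Qed.

Lemma chordC (R : realType) (a b : R) : chord a b = chord b a.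
Proof. by rewrite /chord -cosN opprB. Qed.

Lemma chord_ang (R : realType) (q n : nat) : (0 < q)%N ->
  chord 0 (angn R q n) = 4 * Sn R q n ^+ 2.
Proof.
move=> hq0; have hq : (q%:R : R) != 0 by rewrite pnatr_eq0 -lt0n.
rewrite chordC /chord subr0 /angn -chord_sin /Sn.
by congr (2 - 2 * cos _); rewrite !mulr2n; field.
Qed.

Lemma chord_angN (R : realType) (q n : nat) : (n <= q)%N -> (0 < q)%N ->
  chord 0 (angn R q (q - n)) = 4 * Sn R q n ^+ 2.
Proof.
move=> hn hq0; have hq : (q%:R : R) != 0 by rewrite pnatr_eq0 -lt0n.
rewrite /chord sub0r cosN /angn -chord_sin /Sn natrB //.
have -> : pi *+ 2 * (q%:R - n%:R) / q%:R = (- ((n%:R * (pi / q%:R)) *+ 2)) + pi *+ 2 :> R.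
  by rewrite !mulr2n; field.
by rewrite cosD2pi cosN.
Qed.

Lemma chord_ang2 (R : realType) (q s t : nat) : (t <= q)%N -> (0 < q)%N ->
  chord (angn R q s) (angn R q (q - t)) = 4 * Sn R q (s + t) ^+ 2.
Proof.
move=> hn hq0; have hq : (q%:R : R) != 0 by rewrite pnatr_eq0 -lt0n.
rewrite /chord /angn -chord_sin /Sn natrB //.
have -> : pi *+ 2 * s%:R / q%:R - pi *+ 2 * (q%:R - t%:R) / q%:R =
          ((s + t)%N%:R * (pi / q%:R)) *+ 2 - pi *+ 2 :> R.
  by rewrite natrD !mulr2n; field.
by rewrite -cosD2pi subrK.
Qed.

Lemma chord_refl (R : realType) (a : R) : chord a a = 0.
Proof. by rewrite /chord subrr cos0; ring. Qed.

Lemma angn0 (R : realType) (q : nat) : angn R q 0 = 0.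
Proof. by rewrite /angn mulr0 mul0r. Qed.

Lemma dist_act (R : realType) (p k : nat) (g h : 'rV['F_p]_4) (r1 r2 r3 r4 : R) :
  sqdist (@actD R p k g (X4 k r1 r2 r3 r4)) (actD h (X4 k r1 r2 r3 r4)) =
  r1 ^+ 2 * chord (ang R (g 0 0)) (ang R (h 0 0)) + r2 ^+ 2 * chord (ang R (g 0 1)) (ang R (h 0 1))
  + r3 ^+ 2 * chord (ang R (g 0 2%:R)) (ang R (h 0 2%:R)) + r4 ^+ 2 * chord (ang R (g 0 3%:R)) (ang R (h 0 3%:R)).
Proof. exact: dist_X4. Qed.

Lemma realize_core (R : realType) (p k : nat) (l m1 m2 m3 : R) (s t : nat)
  (g1 g2 : 'rV['F_p]_4) :
  0 <= l -> 0 <= m1 -> 0 <= m2 -> 0 <= m3 ->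
  (t <= (Zp_trunc (pdiv p)).+2)%N ->
  val (g1 0 0) = s -> val (g1 0 1) = 1%N -> val (g1 0 2%:R) = 1%N -> val (g1 0 3%:R) = 0%N ->
  val (g2 0 0) = ((Zp_trunc (pdiv p)).+2 - t)%N -> val (g2 0 1) = 1%N ->
  val (g2 0 2%:R) = 0%N -> val (g2 0 3%:R) = 1%N ->
  Real3 p k
    (4 * l * Sn R (Zp_trunc (pdiv p)).+2 s ^+ 2 + 4 * (m1 + m2) * Sn R (Zp_trunc (pdiv p)).+2 1 ^+ 2)
    (4 * l * Sn R (Zp_trunc (pdiv p)).+2 t ^+ 2 + 4 * (m1 + m3) * Sn R (Zp_trunc (pdiv p)).+2 1 ^+ 2)
    (4 * l * Sn R (Zp_trunc (pdiv p)).+2 (s + t) ^+ 2 + 4 * (m2 + m3) * Sn R (Zp_trunc (pdiv p)).+2 1 ^+ 2).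
Proof.
move=> hl h1 h2 h3 ht a10 a11 a12 a13 a20 a21 a22 a23.
exists (@actD R p k); split; first exact: actD_iso.
exists (X4 k (Num.sqrt l) (Num.sqrt m1) (Num.sqrt m2) (Num.sqrt m3)), g1, g2.
have e0 : forall x, x = @actD R p k 0 x by move=> x; rewrite /actD !mxE !ang0 D40 mulmx1.
rewrite {1 3}(e0 (X4 k (Num.sqrt l) (Num.sqrt m1) (Num.sqrt m2) (Num.sqrt m3))).
have q0 : (0 < (Zp_trunc (pdiv p)).+2)%N by [].
have z0 : forall j, val ((0 : 'rV['F_p]_4) 0 j) = 0%N by move=> j; rewrite mxE.
split; rewrite dist_act /ang ?a10 ?a11 ?a12 ?a13 ?a20 ?a21 ?a22 ?a23 ?z0 !angn0 !sqr_sqrtr //.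
- by rewrite !chord_refl !chord_ang //; ring.
- by rewrite !chord_refl chord_angN // chord_ang //; ring.
- by rewrite chord_ang2 // chord_refl (chordC (angn R _ 1) 0) !chord_ang //; ring.
Qed.

Lemma realize (R : realType) (p k : nat) (l m1 m2 m3 : R) (s t : nat) :
  0 <= l -> 0 <= m1 -> 0 <= m2 -> 0 <= m3 ->
  (0 < t)%N -> (t <= (Zp_trunc (pdiv p)).+2)%N -> (s < (Zp_trunc (pdiv p)).+2)%N ->
  Real3 p k
    (4 * l * Sn R (Zp_trunc (pdiv p)).+2 s ^+ 2 + 4 * (m1 + m2) * Sn R (Zp_trunc (pdiv p)).+2 1 ^+ 2)
    (4 * l * Sn R (Zp_trunc (pdiv p)).+2 t ^+ 2 + 4 * (m1 + m3) * Sn R (Zp_trunc (pdiv p)).+2 1 ^+ 2)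
    (4 * l * Sn R (Zp_trunc (pdiv p)).+2 (s + t) ^+ 2 + 4 * (m2 + m3) * Sn R (Zp_trunc (pdiv p)).+2 1 ^+ 2).
Proof.
move=> hl h1 h2 h3 ht0 ht hs.
pose q := (Zp_trunc (pdiv p)).+2.
pose g1 : 'rV['F_p]_4 := \row_(j < 4) (if val j == 0%N then inZp s else if val j == 3%N then 0 else 1).
pose g2 : 'rV['F_p]_4 := \row_(j < 4) (if val j == 0%N then inZp (q - t) else if val j == 2%N then 0 else 1).
apply: (@realize_core R p k l m1 m2 m3 s t g1 g2) => //.
- by rewrite mxE /= modn_small.
- by rewrite mxE.
- by rewrite mxE.
- by rewrite mxE.
- by rewrite mxE /= modn_small //; rewrite /q; lia.
- by rewrite mxE.
- by rewrite mxE.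
- by rewrite mxE.
Qed.

Lemma Real3_swap (R : realType) (p k : nat) (x y z : R) :
  Real3 p k x y z -> Real3 p k y x z.
Proof.
case=> act [Hact [x0 [g1 [g2 [h1 h2 h3]]]]].
exists act; split => //; exists x0, g2, g1; split => //.
by rewrite sqdistC.
Qed.

Lemma Real3_rebase (R : realType) (p k : nat) (x y z : R) :
  Real3 p k x y z -> Real3 p k x z y.
Proof.
case=> act [Hact [x0 [g1 [g2 [h1 h2 h3]]]]].
case: Hact => [a0 aD aI].
exists act; split => //; exists (act g1 x0), (- g1), (g2 - g1).
have e1 : act (- g1) (act g1 x0) = x0 by rewrite -aD addNr a0.
have e2 : act (g2 - g1) (act g1 x0) = act g2 x0 by rewrite -aD subrK.
rewrite e1 e2; split => //; by rewrite sqdistC.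
Qed.

Lemma obt_alg (R : realType) (x y z a b c c1 : R) :
  0 < c1 -> 0 < z - x - y -> 0 < c - a - b ->
  (z - x - y) * (b + c - a) <= (c - a - b) * (y + z - x) ->
  (z - x - y) * (a + c - b) <= (c - a - b) * (x + z - y) ->
  exists l m1 m2 m3 : R, [/\ 0 <= l, 0 <= m1, 0 <= m2, 0 <= m3 &
    [/\ x = l * a + (m1 + m2) * c1, y = l * b + (m1 + m3) * c1 &
        z = l * c + (m2 + m3) * c1]].
Proof.
move=> hc1 hd hds H1 H2.
have dsn : c - a - b != 0 by rewrite gt_eqF.
have c1n : c1 != 0 by rewrite gt_eqF.
have l0 : 0 <= (z - x - y) / (c - a - b) by rewrite divr_ge0 // ltW.
have hm2 : (z - x - y) / (c - a - b) * (a - b + c) <= x - y + z.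
  rewrite mulrAC ler_pdivrMr // mulrC; lra.
have hm3 : (z - x - y) / (c - a - b) * (b + c - a) <= y + z - x.
  rewrite mulrAC ler_pdivrMr // mulrC; lra.
exists ((z - x - y) / (c - a - b)), 0,
  ((x - y + z - (z - x - y) / (c - a - b) * (a - b + c)) / (c1 * 2)),
  ((y + z - x - (z - x - y) / (c - a - b) * (b + c - a)) / (c1 * 2)).
split; [done|done| | |].
- by rewrite divr_ge0 // ?subr_ge0 // mulr_ge0 // ltW.
- by rewrite divr_ge0 // ?subr_ge0 // mulr_ge0 // ltW.
- by split; field; rewrite c1n dsn.
Qed.

Lemma met_alg (R : realType) (x y z c1 : R) :
  0 < c1 -> z <= x + y -> y <= x + z -> x <= y + z ->
  exists m1 m2 m3 : R, [/\ 0 <= m1, 0 <= m2, 0 <= m3 &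
    [/\ x = 0 * 0 + (m1 + m2) * c1, y = 0 * 0 + (m1 + m3) * c1 &
        z = 0 * 0 + (m2 + m3) * c1]].
Proof.
move=> hc1 h1 h2 h3.
have c1n : c1 != 0 by rewrite gt_eqF.
exists ((x + y - z) / (c1 * 2)), ((x + z - y) / (c1 * 2)), ((y + z - x) / (c1 * 2)).
split.
- by rewrite divr_ge0 ?subr_ge0 // mulr_ge0 // ltW.
- by rewrite divr_ge0 ?subr_ge0 // mulr_ge0 // ltW.
- by rewrite divr_ge0 ?subr_ge0 // mulr_ge0 // ltW.
- by split; field.
Qed.

Lemma sin_le_mul (R : realType) (th : R) (n : nat) :
  0 <= th -> n%:R * th <= pi -> sin (n%:R * th) <= n%:R * sin th.
Proof.
move=> h0; elim: n => [|n IH] hn; first by rewrite !mul0r sin0.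
have hpi := pi_gt0 R.
have hth : th <= pi.
  apply: le_trans hn; rewrite -[X in X <= _]mul1r ler_wpM2r // ler1n //.
have hn' : n%:R * th <= pi by apply: le_trans hn; rewrite ler_wpM2r // ler_nat.
have s0 : 0 <= sin th by apply: sin_ge0_pi; rewrite h0 hth.
have sn0 : 0 <= sin (n%:R * th) by apply: sin_ge0_pi; rewrite hn' mulr_ge0.
have := IH hn'.
rewrite -[n.+1]addn1 natrD !mulrDl !mul1r sinD.
have := cos_le1 th; have := cos_le1 (n%:R * th).
nra.
Qed.

Lemma step_alg (R : realType) (N S C Sn Cn : R) :
  0 <= N -> 0 <= S -> 0 <= C -> C <= 1 -> 0 <= Cn -> N * S * Cn <= Sn ->
  (N + 1) * S * (Cn * C - Sn * S) <= Sn * C + Cn * S.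
Proof.
move=> N0 S0 C0 C1 Cn0 IH.
have P : 0 <= C + (N + 1) * S ^+ 2 by have := sqr_ge0 S; nra.
have A := ler_wpM2r P IH.
have Q : 0 <= 1 - C + N * (N + 1) * S ^+ 2.
  have := sqr_ge0 S; have : 0 <= N * (N + 1) by nra. nra.
have B : 0 <= S * Cn * (1 - C + N * (N + 1) * S ^+ 2) by rewrite !mulr_ge0.
nra.
Qed.

Lemma sin_ge_mul (R : realType) (th : R) (n : nat) :
  0 <= th -> n%:R * th <= pi / 2 -> n%:R * sin th * cos (n%:R * th) <= sin (n%:R * th).
Proof.
move=> h0; elim: n => [|n IH] hn; first by rewrite !mul0r sin0.
have hpi := pi_gt0 R.
have hth : th <= pi / 2.
  apply: le_trans hn; rewrite -[X in X <= _]mul1r ler_wpM2r // ler1n //.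
have hn' : n%:R * th <= pi / 2 by apply: le_trans hn; rewrite ler_wpM2r // ler_nat.
have s0 : 0 <= sin th by apply: sin_ge0_pi; rewrite h0 /=; lra.
have c0 : 0 <= cos th by apply: cos_ge0_pihalf; rewrite hth andbT; lra.
have nt0 : 0 <= n%:R * th by rewrite mulr_ge0.
have cn0 : 0 <= cos (n%:R * th) by apply: cos_ge0_pihalf; rewrite hn' andbT; lra.
have e : n.+1%:R * th = n%:R * th + th by rewrite -addn1 natrD mulrDl mul1r.
rewrite e sinD cosD -[n.+1]addn1 natrD.
apply: step_alg => //; [exact: cos_le1 | exact: IH].
Qed.

Lemma cos_bound (R : realType) (j : nat) (w : R) :
  0 <= w -> w <= pi / (2 ^+ j) -> 1 - cos w <= 2 / (2 ^+ j).
Proof.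
elim: j w => [|j IH] w h0 hw.
  by rewrite expr0 divr1; have := cos_geN1 w; lra.
have hpi := pi_gt0 R.
have p2 : (0 : R) < 2 ^+ j by rewrite exprn_gt0.
have p2n : (2 ^+ j : R) != 0 by rewrite gt_eqF.
have E1 : pi / 2 ^+ j.+1 = (pi / 2 ^+ j) / 2 :> R by rewrite exprS; field.
have E2 : 2 / 2 ^+ j.+1 = (2 / 2 ^+ j) / 2 :> R by rewrite exprS; field.
have hP : (0 : R) < pi / 2 ^+ j by apply: divr_gt0.
have hQ : 0 < 2 / 2 ^+ j :> R by apply: divr_gt0.
have hle : pi / 2 ^+ j <= (pi : R).
  rewrite ler_pdivrMr //; apply: ler_peMr; [exact: ltW | apply: exprn_ege1; lra].
rewrite E1 in hw; rewrite E2.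
have hw2 : w *+ 2 <= pi / 2 ^+ j by rewrite mulr2n; lra.
have := IH (w *+ 2) (mulrn_wge0 _ h0) hw2.
rewrite cos_mulr2n.
have c0 : 0 <= cos w by apply: cos_ge0_pihalf; apply/andP; split; lra.
have c1 := cos_le1 w.
nra.
Qed.

Lemma angle_le (R : realType) (n q j : nat) :
  (0 < q)%N -> (n * 2 ^ j <= q)%N -> n%:R * (pi / q%:R) <= (pi : R) / 2 ^+ j.
Proof.
move=> q0 hn.
have hpi := pi_gt0 R.
have hq : (0 : R) < q%:R by rewrite ltr0n.
have h2 : (0 : R) < 2 ^+ j by rewrite exprn_gt0.
have hn' : (n%:R * 2 ^+ j <= q%:R :> R) by rewrite -natrX -natrM ler_nat.
have eX : pi / q%:R * q%:R = (pi : R) by rewrite divfK // gt_eqF.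
have eY : pi / 2 ^+ j * 2 ^+ j = (pi : R) by rewrite divfK // gt_eqF.
have X0 : (0 : R) < pi / q%:R by apply: divr_gt0.
set X := pi / q%:R in eX X0 *; set Y := pi / 2 ^+ j in eY *.
have : n%:R * X * 2 ^+ j <= Y * 2 ^+ j.
  rewrite eY -[in X in _ <= X]eX; nra.
by rewrite ler_pM2r.
Qed.

Lemma trig_id (R : realType) (u v : R) :
  4 * sin (u + v) ^+ 2 - 4 * sin u ^+ 2 - 4 * sin v ^+ 2 = 8 * sin u * sin v * cos (u + v).
Proof.
rewrite sinD cosD.
have h1 := cos2Dsin2 u; have h2 := cos2Dsin2 v.
have e1 : cos u ^+ 2 = 1 - sin u ^+ 2 by lra.
have e2 : cos v ^+ 2 = 1 - sin v ^+ 2 by lra.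
transitivity (4 * (sin u ^+ 2 * cos v ^+ 2 + 2 * sin u * sin v * cos u * cos v
   + cos u ^+ 2 * sin v ^+ 2) - 4 * sin u ^+ 2 - 4 * sin v ^+ 2); first by ring.
rewrite e1 e2; ring.
Qed.

Lemma keyineq (R : realType) (d y e s t sn S T Cs Cst c0 : R) :
  0 <= d -> 0 <= y -> 0 <= sn -> 0 <= s -> 0 <= c0 -> c0 <= Cs -> c0 <= Cst ->
  e <= c0 * c0 -> T <= t * sn -> s * sn * Cs <= S -> d * t <= 2 * y * e * s ->
  d * T <= 2 * y * S * Cst.
Proof.
move=> d0 y0 sn0 s0 c00 h1 h2 he hT hS hC.
have Cs0 : 0 <= Cs by apply: le_trans h1.
have Cst0 : 0 <= Cst by apply: le_trans h2.
have st1 : d * T <= d * (t * sn) by rewrite ler_wpM2l.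
have st2 : d * t * sn <= 2 * y * e * s * sn by rewrite ler_wpM2r.
have cc : c0 * c0 <= Cs * Cst by rewrite ler_pM.
have st3 : e <= Cs * Cst by apply: le_trans cc.
have ysn : 0 <= 2 * y * s * sn by rewrite !mulr_ge0.
have st4 : 2 * y * s * sn * e <= 2 * y * s * sn * (Cs * Cst) by rewrite ler_wpM2l.
have yC : 0 <= 2 * y * Cst by rewrite !mulr_ge0.
have st5 : 2 * y * Cst * (s * sn * Cs) <= 2 * y * Cst * S by rewrite ler_wpM2l.
have E1 : d * (t * sn) = d * t * sn by rewrite mulrA.
have E2 : 2 * y * e * s * sn = 2 * y * s * sn * e by ring.
have E3 : 2 * y * s * sn * (Cs * Cst) = 2 * y * Cst * (s * sn * Cs) by ring.
have E4 : 2 * y * Cst * S = 2 * y * S * Cst by ring.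
apply: (le_trans st1); rewrite E1; apply: (le_trans st2); rewrite E2.
apply: (le_trans st4); rewrite E3 -E4; exact: st5.
Qed.

Lemma conds_alg (R : realType) (x y d S T Cst : R) :
  0 <= S -> 0 <= T -> d * T <= 2 * y * S * Cst -> d * S <= 2 * x * T * Cst ->
  [/\ d * (4 * T ^+ 2 + (8 * S * T * Cst + 4 * S ^+ 2 + 4 * T ^+ 2) - 4 * S ^+ 2)
      <= 8 * S * T * Cst * (2 * y + d) &
      d * (4 * S ^+ 2 + (8 * S * T * Cst + 4 * S ^+ 2 + 4 * T ^+ 2) - 4 * T ^+ 2)
      <= 8 * S * T * Cst * (2 * x + d)].
Proof.
move=> S0 T0 h1 h2; split.
- have := ler_wpM2l T0 h1; nra.
- have := ler_wpM2l S0 h2; nra.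
Qed.

Lemma choose_st (R : realType) (d A B : R) :
  0 < A -> 0 < B -> 0 < d -> d ^+ 2 < A * B ->
  exists s t : nat, [/\ (0 < s)%N, (0 < t)%N, d * t%:R <= B * s%:R &
                        d * s%:R <= A * t%:R].
Proof.
move=> hA hB hd hH.
have hK : 0 < A * B - d ^+ 2 by rewrite subr_gt0.
set v := d * A / (A * B - d ^+ 2).
have v0 : 0 <= v by rewrite /v divr_ge0 // ?mulr_ge0 // ltW.
have ev : v * (A * B - d ^+ 2) = d * A by rewrite /v divfK // gt_eqF.
have [_ hv] := andP (truncn_itv v0).
set s := (Num.truncn v).+1 in hv.
set w := d * s%:R / A.
have w0 : 0 <= w by rewrite /w divr_ge0 // ?mulr_ge0 // ltW.
have ew : w * A = d * s%:R by rewrite /w divfK // gt_eqF.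
have [hw1 hw2] := andP (truncn_itv w0).
exists s, (Num.truncn w).+1; split => //.
- have ht : (Num.truncn w).+1%:R <= w + 1 :> R by rewrite -addn1 natrD lerD2r.
  have h1 : d * (Num.truncn w).+1%:R <= d * (w + 1) by rewrite ler_wpM2l // ltW.
  apply: (le_trans h1).
  have : d * (w + 1) * A <= B * s%:R * A.
    have e1 : d * (w + 1) * A = d * d * s%:R + d * A.
      by rewrite mulrDr mulr1 mulrDl -mulrA ew; ring.
    rewrite e1.
    have : d * A <= (A * B - d ^+ 2) * s%:R.
      rewrite -ev mulrC ler_wpM2l //; first exact: ltW.
      exact: ltW.
    nra.
  by rewrite ler_pM2r.
- have : d * s%:R < A * (Num.truncn w).+1%:R.
    rewrite -ew mulrC ltr_pM2l //.
  exact: ltW.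
Qed.

Lemma choose_j (R : realType) (e : R) : e < 1 ->
  exists j : nat, (2 <= j)%N /\ e <= (1 - 2 / 2 ^+ j) * (1 - 2 / 2 ^+ j).
Proof.
move=> he.
have h1e : 0 < 1 - e by rewrite subr_gt0.
set v := 4 / (1 - e).
have v0 : 0 <= v by rewrite /v divr_ge0 // ltW.
have ev : v * (1 - e) = 4 by rewrite /v divfK // gt_eqF.
have [_ hv] := andP (truncn_itv v0).
exists (Num.truncn v).+2; split => //.
set j := (Num.truncn v).+2.
have hj : ((Num.truncn v).+1 <= 2 ^ j)%N.
  apply: ltnW; rewrite /j; apply: (@ltn_trans (Num.truncn v).+2) => //.
  by rewrite ltn_expl.
have hP : v <= 2 ^+ j :> R.
  apply: (le_trans (ltW hv)); by rewrite -natrX ler_nat.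
have P0 : (0 : R) < 2 ^+ j by rewrite exprn_gt0.
set u := 2 / 2 ^+ j.
have eu : u * 2 ^+ j = 2 :> R by rewrite /u divfK // gt_eqF.
have u0 : 0 <= u by rewrite /u divr_ge0 // ltW.
have : 4 <= (1 - e) * 2 ^+ j :> R.
  by rewrite -ev mulrC ler_wpM2l // ltW.
nra.
Qed.

Lemma obtuse (R : realType) (k : nat) (x y z : R) :
  0 < x -> 0 < y -> 0 < z - x - y -> (z - x - y) ^+ 2 < 4 * x * y ->
  exists p0 : nat, forall p, prime p -> (p0 <= p)%N -> Real3 p k x y z.
Proof.
move=> hx hy hd hH.
have hxy : 0 < 4 * x * y by rewrite !mulr_gt0.
set r := (z - x - y) ^+ 2 / (4 * x * y).
have er : r * (4 * x * y) = (z - x - y) ^+ 2 by rewrite /r divfK // gt_eqF.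
have r0 : 0 <= r by rewrite /r divr_ge0 ?sqr_ge0 // ltW.
have r1 : r < 1.
  by rewrite /r ltr_pdivrMr // mul1r.
set e := (1 + r) / 2.
have e0 : 0 < e by rewrite /e; lra.
have e1 : e < 1 by rewrite /e; lra.
have hee : r < e * e.
  have : e * e - r = ((1 - r) / 2) ^+ 2 by rewrite /e; field.
  have : 0 < ((1 - r) / 2) ^+ 2 by rewrite exprn_gt0 //; lra.
  lra.
have hH' : (z - x - y) ^+ 2 < (2 * x * e) * (2 * y * e).
  have : (z - x - y) ^+ 2 = r * (4 * x * y) by rewrite er.
  have : r * (4 * x * y) < e * e * (4 * x * y) by rewrite ltr_pM2r.
  move=> h1 h2; rewrite h2; apply: (lt_le_trans h1); rewrite le_eqVlt; apply/orP; left.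
  by apply/eqP; ring.
have [s [t [s0 t0 Hst1 Hst2]]] :=
  choose_st (mulr_gt0 (mulr_gt0 (ltr0n R 2) hx) e0) (mulr_gt0 (mulr_gt0 (ltr0n R 2) hy) e0) hd hH'.
have [j [j2 hj]] := choose_j e1.
exists ((s + t) * 2 ^ j)%N => p pp hp.
have hqp : (Zp_trunc (pdiv p)).+2 = p := Fp_cast pp.
set q := (Zp_trunc (pdiv p)).+2 in hqp *.
have hq0 : (0 < q)%N by [].
have hqge : ((s + t) * 2 ^ j <= q)%N by rewrite hqp.
set th := pi / q%:R : R.
have hpi := pi_gt0 R.
have P0 : (0 : R) < 2 ^+ j by rewrite exprn_gt0.
have P4 : (4 : R) <= 2 ^+ j.
  have -> : (4 : R) = 2 ^+ 2 by rewrite expr2; lra.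
  by rewrite ler_eXn2l //; lra.
have pj0 : 0 < pi / 2 ^+ j :> R by apply: divr_gt0.
have pj : pi / 2 ^+ j <= pi / 4 :> R.
  have eY : pi / 2 ^+ j * 2 ^+ j = pi :> R by rewrite divfK // gt_eqF.
  nra.
have ang : forall n : nat, (n <= s + t)%N -> n%:R * th <= pi / 2 ^+ j.
  move=> n hn; apply: angle_le => //; apply: leq_trans hqge.
  by rewrite leq_mul2r hn orbT.
have th0 : 0 < th by apply: divr_gt0; rewrite ?ltr0n.
have thpi : th < pi.
  have := ang 1%N (leq_trans s0 (leq_addr _ _)); rewrite mul1r; lra.
have sn0 : 0 < sin th by apply: sin_gt0_pi; rewrite th0 thpi.
set c0 : R := 1 - 2 / 2 ^+ j.
have c00 : 0 < c0.
  have eu : 2 / 2 ^+ j * 2 ^+ j = 2 :> R by rewrite divfK // gt_eqF.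
  have u0 : 0 <= 2 / 2 ^+ j :> R by rewrite divr_ge0 // ltW.
  rewrite /c0; nra.
have cosb : forall n : nat, (n <= s + t)%N -> c0 <= cos (n%:R * th).
  move=> n hn; have := cos_bound (mulr_ge0 (ler0n R n) (ltW th0)) (ang n hn).
  rewrite /c0; lra.
have angpi2 : forall n : nat, (n <= s + t)%N -> n%:R * th <= pi / 2.
  by move=> n hn; have := ang n hn; lra.
have angpi : forall n : nat, (n <= s + t)%N -> n%:R * th <= pi.
  by move=> n hn; have := ang n hn; lra.
have hs : (s <= s + t)%N by rewrite leq_addr.
have ht : (t <= s + t)%N by rewrite leq_addl.
have hst : (s + t <= s + t)%N by [].
set S := sin (s%:R * th); set T := sin (t%:R * th).
set Cs := cos (s%:R * th); set Ct := cos (t%:R * th); set Cst := cos ((s + t)%:R * th).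
have Sle : S <= s%:R * sin th by apply: sin_le_mul; [exact: ltW|exact: angpi].
have Tle : T <= t%:R * sin th by apply: sin_le_mul; [exact: ltW|exact: angpi].
have Sge : s%:R * sin th * Cs <= S by apply: sin_ge_mul; [exact: ltW|exact: angpi2].
have Tge : t%:R * sin th * Ct <= T by apply: sin_ge_mul; [exact: ltW|exact: angpi2].
have Cs0 : c0 <= Cs by exact: cosb.
have Ct0 : c0 <= Ct by exact: cosb.
have Cst0 : c0 <= Cst by exact: cosb.
have S0 : 0 < S.
  apply: lt_le_trans Sge; rewrite !mulr_gt0 // ?ltr0n //; exact: lt_le_trans Cs0.
have T0 : 0 < T.
  apply: lt_le_trans Tge; rewrite !mulr_gt0 // ?ltr0n //; exact: lt_le_trans Ct0.
have Cstp : 0 < Cst by exact: lt_le_trans Cst0.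
have K1 : (z - x - y) * T <= 2 * y * S * Cst.
  exact: (keyineq (ltW hd) (ltW hy) (ltW sn0) (ler0n R s) (ltW c00) Cs0 Cst0 hj Tle Sge Hst1).
have K2 : (z - x - y) * S <= 2 * x * T * Cst.
  exact: (keyineq (ltW hd) (ltW hx) (ltW sn0) (ler0n R t) (ltW c00) Ct0 Cst0 hj Sle Tge Hst2).
have [C1 C2] := conds_alg (ltW S0) (ltW T0) K1 K2.
have eU : 4 * sin ((s + t)%:R * th) ^+ 2 = 8 * S * T * Cst + 4 * S ^+ 2 + 4 * T ^+ 2.
  have := trig_id (s%:R * th) (t%:R * th).
  rewrite -mulrDl -natrD -/S -/T -/Cst; lra.
have c1p : 0 < 4 * sin th ^+ 2 by rewrite mulr_gt0 // exprn_gt0.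
have pos8 : 0 < 8 * S * T * Cst by rewrite !mulr_gt0.
have hds : 0 < 4 * sin ((s + t)%:R * th) ^+ 2 - 4 * S ^+ 2 - 4 * T ^+ 2 by rewrite eU; lra.
have H1 : (z - x - y) * (4 * T ^+ 2 + 4 * sin ((s + t)%:R * th) ^+ 2 - 4 * S ^+ 2) <=
    (4 * sin ((s + t)%:R * th) ^+ 2 - 4 * S ^+ 2 - 4 * T ^+ 2) * (y + z - x).
  by rewrite eU; lra.
have H2 : (z - x - y) * (4 * S ^+ 2 + 4 * sin ((s + t)%:R * th) ^+ 2 - 4 * T ^+ 2) <=
    (4 * sin ((s + t)%:R * th) ^+ 2 - 4 * S ^+ 2 - 4 * T ^+ 2) * (x + z - y).
  by rewrite eU; lra.
have [l [m1 [m2 [m3 [l0 m10 m20 m30 [Ex Ey Ez]]]]]] :=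
  @obt_alg R x y z (4 * S ^+ 2) (4 * T ^+ 2) (4 * sin ((s + t)%:R * th) ^+ 2) _ c1p hd hds H1 H2.
have esn : Sn R q 1 = sin th by rewrite /Sn mulr1n mul1r.
have e2 : (0 < 2 ^ j)%N by rewrite expn_gt0.
move: hqge; set P := (2 ^ j)%N => hqge.
have hsq : (s < q)%N.
  apply: leq_trans hqge; apply: (@leq_trans (s + t)); first by rewrite -addn1 leq_add2l.
  exact: leq_pmulr.
have htq : (t <= q)%N.
  apply: leq_trans hqge; apply: (leq_trans (leq_addl s t)); exact: leq_pmulr.
have := @realize R p k l m1 m2 m3 s t l0 m10 m20 m30 t0 htq hsq.
rewrite -/q esn.
have -> : 4 * l * Sn R q s ^+ 2 + 4 * (m1 + m2) * sin th ^+ 2 = x by rewrite Ex; rewrite /Sn -/th -/S; ring.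
have -> : 4 * l * Sn R q t ^+ 2 + 4 * (m1 + m3) * sin th ^+ 2 = y by rewrite Ey; rewrite /Sn -/th -/T; ring.
have -> : 4 * l * Sn R q (s + t) ^+ 2 + 4 * (m2 + m3) * sin th ^+ 2 = z by rewrite Ez; rewrite /Sn -/th; ring.
done.
Qed.

Lemma real_all (R : realType) (k : nat) (x y z : R) :
  0 <= x -> 0 <= y -> 0 <= z -> (z - x - y) ^+ 2 < 4 * x * y ->
  exists p0 : nat, forall p, prime p -> (p0 <= p)%N -> Real3 p k x y z.
Proof.
move=> hx hy hz hH.
have hxy : 0 < x * y by have := sqr_ge0 (z - x - y); nra.
have x0 : 0 < x.
  case: (ltrP 0 x) => // hx'; have ex : x = 0 by apply/eqP; rewrite eq_le hx' hx.
  by move: hxy; rewrite ex mul0r ltxx.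
have y0 : 0 < y.
  case: (ltrP 0 y) => // hy'; have ey : y = 0 by apply/eqP; rewrite eq_le hy' hy.
  by move: hxy; rewrite ey mulr0 ltxx.
case: (ltrP (x + y) z) => [h1|h1].
  by apply: obtuse => //; lra.
case: (ltrP (x + z) y) => [h2|h2].
  have [z0' | ez] : 0 < z \/ z = 0 by move: hz; rewrite le_eqVlt => /orP [/eqP ->|]; [right|left].
    have [p0 Hp] := @obtuse R k x z y x0 z0' ltac:(lra) ltac:(nra).
    by exists p0 => p pp hp; apply: Real3_rebase; apply: Hp.
  by exfalso; move: hH; rewrite ez; nra.
case: (ltrP (y + z) x) => [h3|h3].
  have [z0' | ez] : 0 < z \/ z = 0 by move: hz; rewrite le_eqVlt => /orP [/eqP ->|]; [right|left].
    have [p0 Hp] := @obtuse R k y z x y0 z0' ltac:(lra) ltac:(nra).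
    by exists p0 => p pp hp; apply: Real3_swap; apply: Real3_rebase; apply: Hp.
  by exfalso; move: hH; rewrite ez; nra.
exists 0%N => p pp _.
set q := (Zp_trunc (pdiv p)).+2.
have hq0 : (0 < q)%N by [].
have hpi := pi_gt0 R.
have th0 : (0 : R) < pi / q%:R by apply: divr_gt0; rewrite ?ltr0n.
have thpi : pi / q%:R < (pi : R).
  rewrite ltr_pdivrMr ?ltr0n // ltr_pMr // ltr1n.
  by [].
have esn : Sn R q 1 = sin (pi / q%:R) by rewrite /Sn mulr1n mul1r.
have c1p : 0 < 4 * Sn R q 1 ^+ 2.
  by rewrite esn mulr_gt0 // exprn_gt0 // sin_gt0_pi // th0 thpi.
have [m1 [m2 [m3 [m10 m20 m30 [Ex Ey Ez]]]]] := met_alg c1p h1 h2 h3.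
have := @realize R p k 0 m1 m2 m3 0 1 (lexx 0) m10 m20 m30 isT isT isT.
rewrite -/q Ex Ey Ez.
congr Real3; ring.
Qed.

Lemma dotpN (R : realType) (m : nat) (u : 'rV[R]_m) : dotp (- u) (- u) = dotp u u.
Proof. by rewrite dotpNl dotpC dotpNl opprK. Qed.

Lemma rank_le1 (R : realType) (m : nat) (u v : 'rV[R]_m) (M : 'M[R]_(2, 1)) (w : 'rV[R]_m) :
  col_mx u v = M *m w -> (\rank (col_mx u v) <= 1)%N.
Proof. move=> ->; apply: leq_trans (mxrankM_maxr _ _) _; exact: rank_leq_row. Qed.

Lemma noncol_H (R : realType) (k : nat) (a b c : 'rV[R]_k) :
  non_collinear a b c ->
  (sqdist b c - sqdist a b - sqdist a c) ^+ 2 < 4 * sqdist a b * sqdist a c.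
Proof.
rewrite /non_collinear => hr.
set u := b - a; set v := c - a.
have ex : sqdist a b = dotp u u by rewrite sqdistC sqdistE.
have ey : sqdist a c = dotp v v by rewrite sqdistC sqdistE.
have ez : sqdist b c = dotp u u - 2 * dotp u v + dotp v v.
  rewrite sqdistE.
  have -> : b - c = u - v by rewrite /u /v opprB addrA subrK.
  rewrite !dotpBl !dotpBr (dotpC c b) (dotpC b a) (dotpC c a); ring.
rewrite ex ey ez.
set X := dotp u u; set Y := dotp v v; set B := dotp u v.
have X0 : 0 <= X by exact: dotp_ge0.
case: (ltrP (B ^+ 2) (X * Y)) => [h|h]; first by nra.
exfalso.
have : (\rank (col_mx u v) <= 1)%N; last by rewrite hr.
case: (eqVneq X 0) => [X0'|Xn0].
  have u0 : u = 0 by apply: dotp_eq0.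
  have -> : col_mx u v = col_mx (0 : 'M[R]_1) 1%:M *m v by rewrite mul_col_mx mul0mx mul1mx u0.
  exact: leq_trans (mxrankM_maxr _ _) (rank_leq_row _).
set w := X *: v - B *: u.
have ew : dotp w w = X * (X * Y - B ^+ 2).
  rewrite /w !dotpBl !dotpBr !dotpZl !dotpZr (dotpC v u) -/X -/Y -/B; ring.
have Xp : 0 < X by rewrite lt_def Xn0 X0.
have : dotp w w <= 0 by rewrite ew; apply: mulr_ge0_le0; [exact: X0 | lra].
move=> hw; have w0 : w = 0 by apply: dotp_eq0; apply/eqP; rewrite eq_le hw dotp_ge0.
have ev : v = (B / X) *: u.
  apply: (scalerI Xn0); rewrite scalerA mulrC divfK //.
  by apply/eqP; rewrite -subr_eq0 -/w w0.
have -> : col_mx u v = col_mx (1%:M : 'M[R]_1) (B / X)%:M *m u.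
  by rewrite mul_col_mx mul1mx mul_scalar_mx -ev.
exact: leq_trans (mxrankM_maxr _ _) (rank_leq_row _).
Qed.

Lemma std_incl_sqdist (R : realType) (k n : nat) (x y : 'rV[R]_k) : (k <= n)%N ->
  sqdist (std_incl n x) (std_incl n y) = sqdist x y.
Proof.
move=> hkn.
pose G (i : nat) : R := if @insub nat (fun j => j < k)%N _ i is Some j
                        then (x 0 j - y 0 j) ^+ 2 else 0.
have e1 : sqdist x y = \sum_(i < k) G i.
  by apply: eq_bigr => i _; rewrite /G valK.
have e2 : sqdist (std_incl n x) (std_incl n y) = \sum_(i < n) G i.
  apply: eq_bigr => i _; rewrite /G !mxE.
  by case: insubP => [j _ _ //|_]; rewrite subrr expr0n.
rewrite e1 e2 (big_ord_widen _ _ hkn) [RHS]big_mkcond /=.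
apply: eq_bigr => i _; case: ifP => // hi.
by rewrite /G insubN ?hi.
Qed.

Definition isoPair (R : realType) (N : nat) (f g : 'rV[R]_N -> 'rV[R]_N) :=
  [/\ cancel f g, cancel g f & forall x y, sqdist (f x) (f y) = sqdist x y].

Lemma isoPair_comp (R : realType) (N : nat) (f g f' g' : 'rV[R]_N -> 'rV[R]_N) :
  isoPair f g -> isoPair f' g' -> isoPair (f' \o f) (g \o g').
Proof.
case=> c1 c2 i1 [c1' c2' i1']; split.
- by move=> x /=; rewrite c1' c1.
- by move=> x /=; rewrite c2 c2'.
- by move=> x y /=; rewrite i1' i1.
Qed.

Lemma isoPair_trans (R : realType) (N : nat) (c : 'rV[R]_N) :
  isoPair (fun x => x + c) (fun x => x - c).
Proof.
split; [by move=> x; rewrite addrK | by move=> x; rewrite subrK |].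
by move=> x y; rewrite !sqdistE opprD addrACA subrr addr0.
Qed.

Definition refl (R : realType) (N : nat) (u v x : 'rV[R]_N) : 'rV[R]_N :=
  if u == v then x
  else x - (dotp (x *+ 2 - (u + v)) (u - v) / dotp (u - v) (u - v)) *: (u - v).

Lemma dotp_m2 (R : realType) (N : nat) (x u v w : 'rV[R]_N) :
  dotp (x *+ 2 - (u + v)) w = 2 * dotp x w - dotp u w - dotp v w.
Proof. rewrite dotpBl dotpDl mulr2n dotpDl; ring. Qed.

Lemma refl_inv (R : realType) (N : nat) (u v : 'rV[R]_N) : involutive (refl u v).
Proof.
move=> x; rewrite /refl; case: eqP => // /eqP huv.
have D0 : dotp (u - v) (u - v) != 0.
  by apply/eqP => /dotp_eq0 /eqP; rewrite subr_eq0 (negbTE huv).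
set w := u - v; set D := dotp w w.
set c := dotp (x *+ 2 - (u + v)) w / D.
have -> : dotp ((x - c *: w) *+ 2 - (u + v)) w / D = - c.
  rewrite !dotp_m2 dotpBl dotpZl -/D /c dotp_m2; field; exact: D0.
by rewrite scaleNr opprK subrK.
Qed.

Lemma refl_iso (R : realType) (N : nat) (u v x y : 'rV[R]_N) :
  sqdist (refl u v x) (refl u v y) = sqdist x y.
Proof.
rewrite /refl; case: eqP => // /eqP huv.
have D0 : dotp (u - v) (u - v) != 0.
  by apply/eqP => /dotp_eq0 /eqP; rewrite subr_eq0 (negbTE huv).
set w := u - v; set D := dotp w w.
rewrite !sqdistE !dotp_m2.
set cx := (2 * dotp x w - dotp u w - dotp v w) / D.
set cy := (2 * dotp y w - dotp u w - dotp v w) / D.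
have -> : x - cx *: w - (y - cy *: w) = (x - y) - (cx - cy) *: w.
  by apply/rowP => i; rewrite !mxE; ring.
rewrite !dotpBl !dotpBr !dotpZl !dotpZr -/D /cx /cy (dotpC w x) (dotpC w y).
field; exact: D0.
Qed.

Lemma refl_map (R : realType) (N : nat) (u v : 'rV[R]_N) : refl u v u = v.
Proof.
rewrite /refl; case: eqP => // /eqP huv.
have D0 : dotp (u - v) (u - v) != 0.
  by apply/eqP => /dotp_eq0 /eqP; rewrite subr_eq0 (negbTE huv).
have -> : dotp (u *+ 2 - (u + v)) (u - v) = dotp (u - v) (u - v).
  by congr dotp; rewrite mulr2n opprD addrACA subrr add0r.
by rewrite divff // scale1r opprB addrC subrK.
Qed.

Lemma refl_fix (R : realType) (N : nat) (u v z : 'rV[R]_N) :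
  sqdist z u = sqdist z v -> refl u v z = z.
Proof.
move=> h; rewrite /refl; case: eqP => // _.
have -> : dotp (z *+ 2 - (u + v)) (u - v) = 0.
  move: h; rewrite !sqdistE dotp_m2 !dotpBl !dotpBr (dotpC u z) (dotpC v z) (dotpC v u).
  lra.
by rewrite mul0r scale0r subr0.
Qed.

Lemma refl_isoPair (R : realType) (N : nat) (u v : 'rV[R]_N) :
  isoPair (refl u v) (refl u v).
Proof. by split; [exact: refl_inv | exact: refl_inv | exact: refl_iso]. Qed.

Lemma congruence (R : realType) (N : nat) (P0 P1 P2 Q0 Q1 Q2 : 'rV[R]_N) :
  sqdist P0 P1 = sqdist Q0 Q1 -> sqdist P0 P2 = sqdist Q0 Q2 -> sqdist P1 P2 = sqdist Q1 Q2 ->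
  exists f g, [/\ isoPair f g, f P0 = Q0, f P1 = Q1 & f P2 = Q2].
Proof.
move=> h01 h02 h12.
pose f1 := fun x : 'rV[R]_N => x + (Q0 - P0).
pose g1 := fun x : 'rV[R]_N => x - (Q0 - P0).
have I1 : isoPair f1 g1 := isoPair_trans _.
have [_ _ i1] := I1.
pose f2 := refl (f1 P1) Q1.
have I2 := refl_isoPair (f1 P1) Q1.
have [_ _ i2] := I2.
pose f3 := refl (f2 (f1 P2)) Q2.
have I3 := refl_isoPair (f2 (f1 P2)) Q2.
have [_ _ i3] := I3.
have e0 : f1 P0 = Q0 by rewrite /f1 addrCA subrr addr0.
have e20 : f2 Q0 = Q0.
  by apply: refl_fix; rewrite -{1}e0 i1 h01.
have e21 : f2 (f1 P1) = Q1 by exact: refl_map.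
have e30 : f3 Q0 = Q0.
  by apply: refl_fix; rewrite -{1}e20 -{1}e0 i2 i1 h02.
have e31 : f3 Q1 = Q1.
  by apply: refl_fix; rewrite -{1}e21 i2 i1 h12.
exists (f3 \o (f2 \o f1)), ((g1 \o refl (f1 P1) Q1) \o refl (f2 (f1 P2)) Q2).
split.
- exact: isoPair_comp (isoPair_comp I1 I2) I3.
- by rewrite /= e0 e20 e30.
- by rewrite /= e21 e31.
- by rewrite /= /f3 refl_map.
Qed.

Lemma conj_action (R : realType) (p alpha N : nat)
  (act : 'rV['F_p]_alpha -> 'rV[R]_N -> 'rV[R]_N) (f g : 'rV[R]_N -> 'rV[R]_N) :
  isometric_action act -> isoPair f g -> isometric_action (fun h x => f (act h (g x))).
Proof.
case=> a0 aD aI [c1 c2 i].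
split.
- by move=> x; rewrite a0 c2.
- by move=> h1 h2 x; rewrite c1 aD.
- by move=> h x y; rewrite i aI -{2}(c2 x) -{2}(c2 y) i.
Qed.

Unset Implicit Arguments.

Theorem theorem4 (R : realType) (k : nat) (a b c : 'rV[R]_k) :
  non_collinear a b c ->
  exists p0 : nat, forall p : nat, prime p -> (p0 <= p)%N ->
    euclidean_sub_p_toral p (fun x => x = a \/ x = b \/ x = c).
Proof.
move=> hnc.
have hH := noncol_H hnc.
have [p0 Hp0] := @real_all R k (sqdist a b) (sqdist a c) (sqdist b c)
  (sqdist_ge0 _ _) (sqdist_ge0 _ _) (sqdist_ge0 _ _) hH.
exists p0 => p pp hp.
have [act [Hact [x0 [g1 [g2 [d1 d2 d3]]]]]] := Hp0 p pp hp.
have hkN : (k <= 2 + (2 + (2 + (2 + k))))%N by rewrite !addnA leq_addl.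
have e0 : act 0 x0 = x0 by case: Hact => H _ _; rewrite H.
have h01 : sqdist x0 (act g1 x0) =
    sqdist (std_incl (2 + (2 + (2 + (2 + k)))) a) (std_incl (2 + (2 + (2 + (2 + k)))) b).
  by rewrite std_incl_sqdist // d1.
have h02 : sqdist x0 (act g2 x0) =
    sqdist (std_incl (2 + (2 + (2 + (2 + k)))) a) (std_incl (2 + (2 + (2 + (2 + k)))) c).
  by rewrite std_incl_sqdist // d2.
have h12 : sqdist (act g1 x0) (act g2 x0) =
    sqdist (std_incl (2 + (2 + (2 + (2 + k)))) b) (std_incl (2 + (2 + (2 + (2 + k)))) c).
  by rewrite std_incl_sqdist // d3.
have [f [g [Ifg f0 f1 f2]]] := congruence h01 h02 h12.
have [cfg _ _] := Ifg.
exists (2 + (2 + (2 + (2 + k))))%N; split => //; exists 4%N; split => //.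
exists (fun h x => f (act h (g x))); split; first exact: (conj_action Hact Ifg).
exists (f x0) => X [->|[->|->]].
- by exists 0; rewrite cfg e0 f0.
- by exists g1; rewrite cfg f1.
- by exists g2; rewrite cfg f2.
Qed.
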